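(* Let $\Gamma$ be an $N_{\mathbb R}$-parameterized tropical curve, let $\Gamma_0\subset\Gamma$ be the maximal subgraph with $V(\Gamma_0)=V^f(\Gamma)$ whose edges are bounded edges with trivial slope ($N_e=0$), and let $\overline\Gamma=\Gamma/\Gamma_0$ be obtained by contracting each connected component of $\Gamma_0$ to a vertex (with $h_{\overline\Gamma}$ equal to the common value of $h_\Gamma$ on that component, and unchanged elsewhere; this is an $N_{\mathbb R}$-parameterized tropical curve with $g(\overline\Gamma)\le g(\Gamma)$). Fix an orientation of $\Gamma$ and the induced one on $\overline\Gamma$. Then for every abelian group $G$ the natural map $\mathbb E^1_G(\overline\Gamma)\to\mathbb E^1_G(\Gamma)$ (diagonal on vertices, inclusion on edges) is an isomorphism, and there is an exact sequence $$0\to\mathbb E^2_G(\overline\Gamma)\to\mathbb E^2_G(\Gamma)\to N_G^{\,g(\Gamma)-g(\overline\Gamma)}\to0.$$ The same holds with $\mathbb E^\bullet$ replaced by $\mathcal E^\bullet$.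
   Context: $N$ a lattice, $N_G=N\otimes G$. An $N_{\mathbb R}$-parameterized tropical curve: tropical curve $\Gamma$ (finite connected metric graph; finite vertices $V^f$; ordered infinite vertices of valency one joined to finite vertices by unbounded edges of length $\infty$; bounded edges $E^b$ with lengths $|e|>0$) with $h_\Gamma:V(\Gamma)\to N_{\mathbb R}$, $h_\Gamma(v)\in N$ for infinite $v$, $\frac1{|e|}(h_\Gamma(v)-h_\Gamma(v'))\in N$ for bounded $e$ joining $v,v'$, balancing $\sum_{v'\in V^f,e\in E_{vv'}}\frac1{|e|}(h_\Gamma(v')-h_\Gamma(v))+\sum_{v'\in V^\infty,e\in E_{vv'}}h_\Gamma(v')=0$ at each finite $v$. Genus $g(\Gamma)=1-|V(\Gamma)|+|E(\Gamma)|$. Slope $N_e=N\cap\mathbb R(h_\Gamma(v)-h_\Gamma(v'))$ of bounded $e$; multiplicity $l(e)$ = integral length of $\frac1{|e|}(h_\Gamma(v)-h_\Gamma(v'))$. Complexes: with $\epsilon(e,v)=-1,1,0$ if $v$ is initial point, target, neither, define $b_G,\beta_G:\big(\bigoplus_{v\in V^f}N_G\big)\oplus\big(\bigoplus_{e\in E^b}(N_e)_G\big)\to\bigoplus_{e\in E^b}N_G$ by $x_v\mapsto(\epsilon(e,v)x_v)_e$, $x_e\mapsto x_e$ resp. $x_e\mapsto l(e)x_e$; $\mathbb E^1_G,\mathbb E^2_G$ kernel and cokernel of $b_G$, $\mathcal E^1_G,\mathcal E^2_G$ of $\beta_G$. *)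

(* Defs.v *)
From HB Require Import structures.
From mathcomp Require Import all_boot all_order all_algebra.
Set Implicit Arguments. Unset Strict Implicit. Unset Printing Implicit Defensive.
Import Order.TTheory GRing.Theory Num.Theory.
Local Open Scope ring_scope.

(* The lattice N is Z^n (row vectors 'rV[int]_n), N_R = R^n ('rV[R]_n) for an
   archimedean real field R (e.g. the reals), N_G = N (x) G = 'rV[G]_n. *)

(* Combinatorial data of an oriented N_R-parameterized tropical curve:
   finite vertices Vf, infinite vertices Vi (each joined by one unbounded
   edge to the finite vertex att w), bounded edges Eb oriented from src to
   tgt, lengths len, and the parameterization hf (finite vertices),
   hi (infinite vertices, values in N). *)
Record curve (R : archiRealFieldType) (n : nat) := Curve {
  Vf : finType; Vi : finType; Eb : finType;
  src : Eb -> Vf; tgt : Eb -> Vf; att : Vi -> Vf;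
  len : Eb -> R;
  hf : Vf -> 'rV[R]_n;
  hi : Vi -> 'rV[int]_n }.
Arguments Vf {R n} c.
Arguments Vi {R n} c.
Arguments Eb {R n} c.
Arguments src {R n c}.
Arguments tgt {R n c}.
Arguments att {R n c}.
Arguments len {R n c}.
Arguments hf {R n c}.
Arguments hi {R n c}.

Section Curves.
Variables (R : archiRealFieldType) (n : nat).
Implicit Types (C : curve R n).

Definition intv (k : 'rV[int]_n) : 'rV[R]_n := map_mx (fun z : int => z%:~R) k.

Definition adj C : rel (Vf C) := fun x y =>
  [exists e : Eb C, ((src e == x) && (tgt e == y)) || ((src e == y) && (tgt e == x))].

Definition is_curve C : Prop :=
  [/\ (forall e : Eb C, 0 < len e),
      (forall e : Eb C, exists k : 'rV[int]_n,
          (len e)^-1 *: (hf (tgt e) - hf (src e)) = intv k),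
      (forall v : Vf C,
          \sum_(e : Eb C | src e == v) (len e)^-1 *: (hf (tgt e) - hf v)
        + \sum_(e : Eb C | tgt e == v) (len e)^-1 *: (hf (src e) - hf v)
        + \sum_(w : Vi C | att w == v) intv (hi w) = 0)
    & (forall x y : Vf C, connect (@adj C) x y)].

(* genus g = 1 - |V| + |E|, V = Vf + Vi, E = Eb + unbounded edges (one per Vi) *)
Definition genus C : int :=
  1 - (#|Vf C| + #|Vi C|)%N%:Z + (#|Eb C| + #|Vi C|)%N%:Z.

Definition inNe C (e : Eb C) (k : 'rV[int]_n) : Prop :=
  exists r : R, intv k = r *: (hf (src e) - hf (tgt e)).

Definition lmult C (e : Eb C) : nat :=
  \big[gcdn/0%N]_(i < n)
     `|Num.floor ((len e)^-1 * (hf (tgt e) ord0 i - hf (src e) ord0 i))|%N.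

Definition trivslope C (e : Eb C) : bool := hf (src e) == hf (tgt e).

Definition adj0 C : rel (Vf C) := fun x y =>
  [exists e : Eb C, trivslope e &&
     (((src e == x) && (tgt e == y)) || ((src e == y) && (tgt e == x)))].

Lemma adj0_sym C : symmetric (@adj0 C).
Proof.
move=> x y; apply/existsP/existsP => -[e He]; exists e;
  by move: He; rewrite orbC.
Qed.

Lemma root0_root C (v : Vf C) : fingraph.root (@adj0 C) (fingraph.root (@adj0 C) v) == fingraph.root (@adj0 C) v.
Proof. by rewrite root_root //; apply: sym_connect_sym; apply: adj0_sym. Qed.

(* vertices of Gamma/Gamma_0 : one representative (root) per connected
   component of Gamma_0 *)
Definition Vbar C := {v : Vf C | fingraph.root (@adj0 C) v == v}.
Definition piv C (v : Vf C) : Vbar C := exist _ (fingraph.root (@adj0 C) v) (root0_root v).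
(* bounded edges of Gamma/Gamma_0 : edges of Gamma not in Gamma_0 *)
Definition Ebar C := {e : Eb C | ~~ trivslope e}.

Definition contract C : curve R n :=
  @Curve R n (Vbar C) (Vi C) (Ebar C)
    (fun e => piv (src (val e))) (fun e => piv (tgt (val e)))
    (fun w => piv (att w))
    (fun e => len (val e))
    (fun w => hf (val w))
    (@hi _ _ C).

Variable G : zmodType.
Notation NG := 'rV[G]_n.

Definition tens (k : 'rV[int]_n) (g : G) : NG := \row_i (g *~ k ord0 i).

(* (N_e)_G, viewed as its image in N_G (N_e is saturated in N, hence a direct
   summand, so N_e (x) G -> N (x) G is injective): sums of k (x) g, k in N_e *)
Definition inNeG C (e : Eb C) (y : NG) : Prop :=
  exists s : seq ('rV[int]_n * G),
    (forall p, p \in s -> inNe e p.1) /\ y = \sum_(p <- s) tens p.1 p.2.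

(* b_G (beta = false) and beta_G (beta = true) *)
Definition dmap (beta : bool) C (xv : {ffun Vf C -> NG}) (xe : {ffun Eb C -> NG})
  : {ffun Eb C -> NG} :=
  [ffun e => xv (tgt e) - xv (src e) + xe e *+ (if beta then lmult e else 1%N)].

(* (xv, xe) lies in the domain and in the kernel: an element of E^1 / cal E^1 *)
Definition inE1 (beta : bool) C (xv : {ffun Vf C -> NG}) (xe : {ffun Eb C -> NG}) :=
  (forall e, inNeG e (xe e)) /\ dmap beta xv xe = 0.

(* z lies in the image of b_G / beta_G (E^2 = cokernel = C1 / image) *)
Definition inIm (beta : bool) C (z : {ffun Eb C -> NG}) :=
  exists (xv : {ffun Vf C -> NG}) (xe : {ffun Eb C -> NG}),
    (forall e, inNeG e (xe e)) /\ dmap beta xv xe = z.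

Definition liftV C (xv : {ffun Vf (contract C) -> NG}) : {ffun Vf C -> NG} :=
  [ffun v => xv (piv v)].
Definition liftE C (xe : {ffun Eb (contract C) -> NG}) : {ffun Eb C -> NG} :=
  [ffun e => if @insub _ (fun e => ~~ trivslope e) (Ebar C) e is Some e' then xe e' else 0].

End Curves.

Arguments inE1 {R n} G beta {C} xv xe.
Arguments inIm {R n} G beta {C} z.

(* Main.v *)
Require Import Defs.
From HB Require Import structures.
From mathcomp Require Import all_boot all_order all_algebra.
Set Implicit Arguments. Unset Strict Implicit. Unset Printing Implicit Defensive.
Import Order.TTheory GRing.Theory Num.Theory.
Local Open Scope ring_scope.

Lemma subBB (M : zmodType) (a b c d : M) : (a - b) - (c - d) = (a - c) - (b - d).
Proof. by rewrite !opprB addrACA [in RHS]addrACA (addrC (- c)). Qed.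
Lemma sw4 (M : zmodType) (a b c d : M) : a - b = c - d -> a - c = b - d.
Proof. by move=> h; apply/eqP; rewrite -subr_eq0 -subBB h subrr. Qed.
Lemma addBB (M : zmodType) (a b c d : M) : (a + c) - (b + d) = (a - b) + (c - d).
Proof. by rewrite opprD addrACA. Qed.

Section Graph.
Variables (V E : finType) (s t : E -> V).

Definition adjS (S : {set E}) : rel V := fun x y =>
  [exists f in S, ((s f == x) && (t f == y)) || ((s f == y) && (t f == x))].

Lemma adjS_sym S : symmetric (adjS S).
Proof.
move=> x y; apply/existsP/existsP => -[f /andP[fS H]]; exists f;
  by rewrite fS /= orbC.
Qed.

Lemma csym S : connect_sym (adjS S).
Proof. exact: sym_connect_sym (@adjS_sym S). Qed.

Lemma connect_const (T : Type) (S : {set E}) (w : V -> T) :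
  (forall f, f \in S -> w (t f) = w (s f)) ->
  forall u v, connect (adjS S) u v -> w u = w v.
Proof.
move=> H u v /connectP[p pp ->]; elim: p u pp => //= a p IH u /andP[Ha pp].
rewrite -(IH _ pp).
by case/existsP: Ha => f /andP[fS /orP[]/andP[/eqP<- /eqP<-]]; rewrite H.
Qed.

Lemma adjSU e S x y : adjS (e |: S) x y =
  adjS S x y || (((s e == x) && (t e == y)) || ((s e == y) && (t e == x))).
Proof.
apply/existsP/orP => [[f /andP[]]|[/existsP[f /andP[fS H]]|H]].
- rewrite !inE => /orP[/eqP->|fS H]; [by right| by left; apply/existsP; exists f; rewrite fS].
- by exists f; rewrite !inE fS orbT.
- by exists e; rewrite !inE eqxx.
Qed.

Section Step.
Variables (e : E) (S : {set E}).
Local Notation x0 := (s e).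
Local Notation y0 := (t e).
Local Notation c1 := (connect (adjS S)).
Local Notation c2 := (connect (adjS (e |: S))).

Lemma c12 u v : c1 u v -> c2 u v.
Proof.
apply: connect_sub => a b H; apply: connect1; by rewrite adjSU H.
Qed.

Lemma connectU u v :
  c2 u v = [|| c1 u v, c1 u x0 && c1 y0 v | c1 u y0 && c1 x0 v].
Proof.
have sym1 := csym S.
have e12 : c2 x0 y0 by apply: connect1; rewrite adjSU !eqxx /= orbT.
apply/idP/idP; last first.
  case/or3P => [/c12 //|/andP[/c12 h1 /c12 h2]|/andP[/c12 h1 /c12 h2]].
  - by apply: connect_trans h1 (connect_trans e12 h2).
  - apply: connect_trans h1 (connect_trans _ h2).
    by rewrite (csym (e |: S)).
move/connectP=> [p pp ->]; elim/last_ind: p pp => [|p a IH]; first by rewrite connect0.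
rewrite rcons_path last_rcons => /andP[pp Hab]; have := IH pp.
move: (last u p) Hab => b; rewrite adjSU => /orP[Hb|Hb].
  have hb := connect1 Hb; have hb' : c1 a b by rewrite sym1.
  case/or3P => [h|/andP[h1 h2]|/andP[h1 h2]].
  - by rewrite (connect_trans h hb).
  - by rewrite h1 (connect_trans h2 hb) orbT.
  - by rewrite h1 (connect_trans h2 hb) !orbT.
have key : forall w, [|| c1 u w, c1 u x0 && c1 y0 w | c1 u y0 && c1 x0 w] ->
   (w == x0) || (w == y0) -> c1 u x0 || c1 u y0.
  move=> w H /orP[]/eqP Hw; move: H; rewrite Hw.
    by case/or3P => [->|/andP[->]|/andP[->]] //; rewrite orbT.
  by case/or3P => [->|/andP[->]|/andP[->]] //; rewrite orbT.
case/orP: Hb => /andP[/eqP Hx /eqP Hy] H.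
- have := key _ H; rewrite -Hx eqxx => /(_ isT) /orP[h|h].
    by rewrite -Hy h connect0 orbT.
  by rewrite -Hy h.
- have := key _ H; rewrite -Hy eqxx orbT => /(_ isT) /orP[h|h].
    by rewrite -Hx h.
  by rewrite -Hx h connect0 !orbT.
Qed.

Definition compn (S0 : {set E}) := n_comp (adjS S0) V.

Lemma comp_conn : connect (adjS S) x0 y0 -> compn (e |: S) = compn S.
Proof.
move=> hxy; apply: eq_n_comp => u v; rewrite connectU.
have sym1 := csym S.
have hyx : c1 y0 x0 by rewrite sym1.
apply/idP/idP => [|->//].
case/or3P => [//|/andP[h1 h2]|/andP[h1 h2]].
  exact: (connect_trans h1 (connect_trans hxy h2)).
exact: (connect_trans h1 (connect_trans hyx h2)).
Qed.

Lemma comp_nconn : ~~ connect (adjS S) x0 y0 -> (compn (e |: S)).+1 = compn S.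
Proof.
move=> hxy; have sym1 := csym S.
pose A := [pred z | c1 x0 z || c1 y0 z].
rewrite /compn (n_compC A) [RHS](n_compC A).
have -> : n_comp (adjS (e |: S)) A = 1%N.
  rewrite (@eq_n_comp_r _ _ _ (connect (adjS (e |: S)) x0)).
    exact: n_comp_connect (csym _) _.
  by move=> z; rewrite !inE connectU connect0 /= (negbTE hxy) /= orbF.
have -> : n_comp (adjS S) A = 2%N.
  rewrite (@eq_n_comp_r _ _ _ (closure (adjS S) (pred2 x0 y0))).
    by rewrite n_comp_closure2 // hxy.
  move=> z; rewrite !inE /closure_mem unfold_in; apply/idP/idP.
    case/orP=> h; apply/pred0Pn; [exists x0|exists y0];
      by rewrite /= !inE eqxx ?orbT andbT sym1 h.
  case/pred0Pn => w /andP[/= h]; rewrite !inE => /orP[]/eqP hw;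
    by have h' : c1 z w := h; rewrite -hw (sym1 w z) h' ?orbT.
suff -> : n_comp (adjS (e |: S)) [predC A] = n_comp (adjS S) [predC A] by [].
apply: eq_card => z; rewrite !inE.
case Az: (c1 x0 z || c1 y0 z); rewrite ?andbF // !andbT.
move/norP: Az => [h1 h2].
rewrite /roots /root; congr (odflt _ _ == _); apply: eq_pick => v /=.
rewrite connectU.
by rewrite (sym1 z x0) (negbTE h1) (sym1 z y0) (negbTE h2) /= orbF.
Qed.
End Step.

Lemma adjS0 x y : adjS set0 x y = false.
Proof. by apply/existsP => -[f]; rewrite inE. Qed.

Lemma compn0 : compn set0 = #|V|.
Proof.
rewrite /compn /n_comp_mem; apply: eq_card => x; rewrite !inE andbT.
have : connect (adjS set0) x (fingraph.root (adjS set0) x) by exact: connect_root.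
move/connectP=> [[|a p]] //=; last by rewrite adjS0.
by move=> _ Hr; apply/eqP.
Qed.

Variable M : zmodType.

Definition Inv (S : {set E}) : Prop :=
 exists b : nat, (b + #|V| = #|S| + compn S)%N /\
 exists (phi : {ffun E -> M} -> {ffun 'I_b -> M}) (sec : {ffun E -> M} -> {ffun V -> M}),
 [/\ forall z z', phi (z - z') = phi z - phi z',
     forall z z', sec (z - z') = sec z - sec z',
     forall z z' : {ffun E -> M}, {in S, z =1 z'} -> phi z = phi z' /\ sec z = sec z'
   & forall T, exists z, phi z = T] /\
 (forall z : {ffun E -> M}, phi z = 0 -> forall f, f \in S -> z f = sec z (t f) - sec z (s f)) /\
 (forall (z : {ffun E -> M}) (xv : {ffun V -> M}), (forall f, f \in S -> z f = xv (t f) - xv (s f)) -> phi z = 0).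

Lemma Inv0 : Inv set0.
Proof.
exists 0%N; split; first by rewrite cards0 compn0.
exists (fun _ => 0), (fun _ => 0); split; [split|split].
- by move=> *; rewrite subr0.
- by move=> *; rewrite subr0.
- by [].
- by move=> T; exists 0; apply/ffunP => -[].
- by move=> z _ f; rewrite inE.
- by [].
Qed.

Lemma InvS (e : E) (S : {set E}) : e \notin S -> Inv S -> Inv (e |: S).
Proof.
move=> eS [b [hb [phi [sec [[phB secB loc surj] [K1 K2]]]]]].
have sym1 := csym S.
pose c (z : {ffun E -> M}) := z e - (sec z (t e) - sec z (s e)).
have cB z z' : c (z - z') = c z - c z'.
  by rewrite /c secB !ffunE (subBB (sec z (t e))) subBB.
have locS (z z' : {ffun E -> M}) : {in e |: S, z =1 z'} ->
    [/\ phi z = phi z', sec z = sec z' & c z = c z'].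
  move=> H; have [h1 h2] : phi z = phi z' /\ sec z = sec z'.
    by apply: loc => f fS; apply: H; rewrite !inE fS orbT.
  by split=> //; rewrite /c h2 H // !inE eqxx.
have modz (z : {ffun E -> M}) (d : M) :
   let z' := z + [ffun f => if f == e then d else 0] in
   [/\ phi z' = phi z, sec z' = sec z & c z' = c z + d].
  move=> z'; have [h1 h2] : phi z' = phi z /\ sec z' = sec z.
    apply: loc => f fS; rewrite /z' !ffunE.
    by case: eqP => [fe|_]; [by move: eS; rewrite -fe fS | rewrite addr0].
  by split=> //; rewrite /c h2 /z' !ffunE eqxx addrAC.
have potS (z : {ffun E -> M}) (xv : {ffun V -> M}) :
   phi z = 0 -> (forall f, f \in S -> z f = xv (t f) - xv (s f)) ->
   forall u v, connect (adjS S) u v -> sec z u - xv u = sec z v - xv v.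
  move=> h0 hp; apply: connect_const => f fS.
  by apply: sw4; rewrite -K1 // hp.
case: (boolP (connect (adjS S) (s e) (t e))) => hc.
- exists b.+1; split.
    by rewrite addSn hb cardsU1 eS comp_conn.
  exists (fun z => [ffun i : 'I_b.+1 => if unlift ord_max i is Some j then phi z j else c z]), sec.
  split; [split|split].
  + by move=> z z'; apply/ffunP => i; rewrite !ffunE; case: unlift => [j|]; rewrite ?phB ?cB ?ffunE.
  + exact: secB.
  + move=> z z' H; have [h1 h2 h3] := locS z z' H.
    by split => //; apply/ffunP => i; rewrite !ffunE h1 h3.
  + move=> T; have [z hz] := surj [ffun j => T (lift ord_max j)].
    have [h1 h2 h3] := modz z (T ord_max - c z).
    exists (z + [ffun f => if f == e then T ord_max - c z else 0]); apply/ffunP => i; rewrite ffunE h1 h3 hz.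
    case: unliftP => [j ->|->]; first by rewrite ffunE.
    by rewrite addrC subrK.
  + move=> z H0.
    have hz : phi z = 0.
      apply/ffunP => j; have := congr1 (fun F : {ffun 'I_b.+1 -> M} => F (lift ord_max j)) H0.
      by rewrite !ffunE liftK.
    have hcz : c z = 0.
      by have := congr1 (fun F : {ffun 'I_b.+1 -> M} => F ord_max) H0; rewrite !ffunE unlift_none.
    move=> f; rewrite !inE => /orP[/eqP->|fS]; last exact: K1.
    exact: subr0_eq.
  + move=> z xv hp.
    have hz : phi z = 0 by apply: K2 => f fS; apply: hp; rewrite !inE fS orbT.
    have hcz : c z = 0.
      have he := hp e (setU11 e S).
      have := potS z xv hz (fun f fS => hp f (setU1r e fS)) _ _ hc.
      move/esym/sw4 => h; rewrite /c he; apply/eqP; rewrite subr_eq0; apply/eqP.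
      by rewrite h.
    apply/ffunP => i; rewrite !ffunE; case: unlift => [j|]; rewrite ?hz ?hcz ?ffunE //.
- exists b; split.
    by rewrite hb cardsU1 eS -(comp_nconn hc) addnS addSn.
  exists phi, (fun z => [ffun v => sec z v + (if connect (adjS S) (t e) v then c z else 0)]).
  split; [split|split].
  + exact: phB.
  + move=> z z'; apply/ffunP => v; rewrite !ffunE secB ffunE cB.
    by case: ifP => _; rewrite !ffunE ?subr0 ?addr0 // addBB.
  + move=> z z' H; have [h1 h2 h3] := locS z z' H.
    by split => //; apply/ffunP => v; rewrite !ffunE h2 h3.
  + exact: surj.
  + move=> z H0 f; rewrite !ffunE !inE => /orP[/eqP->|fS].
      rewrite connect0 (sym1 (t e)) (negbTE hc) addr0 addrAC /c.
      by rewrite addrC subrK.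
    have ef : connect (adjS S) (t e) (t f) = connect (adjS S) (t e) (s f).
      apply: (same_connect1r sym1); apply/existsP; exists f.
      by rewrite fS !eqxx orbT.
    rewrite ef; case: ifP => _; last by rewrite !addr0; apply: K1.
    by rewrite addBB subrr addr0; apply: K1.
  + by move=> z xv hp; apply: K2 => f fS; apply: hp; rewrite !inE fS orbT.
Qed.

Lemma InvAll (S : {set E}) : Inv S.
Proof.
move: {2}#|S| (erefl #|S|) => k; elim: k S => [|k IH] S hS.
  by rewrite (cards0_eq hS); exact: Inv0.
have [e eS] : exists e, e \in S by apply/set0Pn; rewrite -card_gt0 hS.
rewrite -(setD1K eS); apply: InvS; first by rewrite !inE eqxx.
by apply: IH; move: hS; rewrite (cardsD1 e) eS add1n => -[].
Qed.
End Graph.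

Set Implicit Arguments. Unset Strict Implicit. Unset Printing Implicit Defensive.
Import Order.TTheory GRing.Theory Num.Theory.
Local Open Scope ring_scope.

Section Cur.
Variables (R : archiRealFieldType) (n : nat) (C : curve R n) (G : zmodType).
Local Notation NG := 'rV[G]_n.
Local Notation E0 := [set e : Eb C | trivslope e].
Local Notation aS := (adjS (@src R n C) (@tgt R n C) E0).

Lemma adj0_eq : adj0 (C:=C) =2 aS.
Proof. by move=> x y; apply: eq_existsb => e; rewrite inE. Qed.

Lemma const_piv (T : Type) (w : Vf C -> T) :
  (forall e : Eb C, trivslope e -> w (tgt e) = w (src e)) ->
  forall v, w (val (piv v)) = w v.
Proof.
move=> H v; symmetry; apply: (connect_const (S := E0)).
  by move=> f; rewrite inE; apply: H.
by rewrite -(eq_connect adj0_eq); apply: connect_root.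
Qed.

Lemma hf_piv (v : Vf C) : hf (val (piv v)) = hf v.
Proof. by apply: const_piv => e /eqP. Qed.

Lemma piv_val (u : Vbar C) : piv (val u) = u.
Proof. by apply: val_inj => /=; apply/eqP; exact: (valP u). Qed.

Lemma piv_edge (e : Eb C) : trivslope e -> piv (src e) = piv (tgt e).
Proof.
move=> He; apply: val_inj => /=.
apply/(fingraph.rootP (sym_connect_sym (adj0_sym (C:=C)))); apply: connect1.
by apply/existsP; exists e; rewrite He !eqxx.
Qed.

Lemma inNeG_triv (e : Eb C) (y : NG) : trivslope e -> inNeG e y -> y = 0.
Proof.
move=> /eqP He [s [Hs ->]]; apply: big1_seq => p /andP[_ /Hs [r Hr]].
apply/rowP => i; rewrite !mxE.
have := congr1 (fun m : 'rV[R]_n => m ord0 i) Hr; rewrite He subrr scaler0 !mxE.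
by move/eqP; rewrite intr_eq0 => /eqP->; rewrite mulr0z.
Qed.

Lemma inNeG0 (e : Eb C) : inNeG e (0 : NG).
Proof. by exists [::]; split => //; rewrite big_nil. Qed.

Lemma inNeG_contract (u : Eb (contract C)) (y : NG) : inNeG u y <-> inNeG (val u) y.
Proof. by rewrite /inNeG /inNe /= !hf_piv. Qed.

Lemma lmult_contract (u : Eb (contract C)) : lmult u = lmult (val u).
Proof. by rewrite /lmult /= !hf_piv. Qed.

Lemma liftE_val (xe : {ffun Eb (contract C) -> NG}) (u : Eb (contract C)) :
  liftE xe (val u) = xe u.
Proof. by rewrite ffunE valK. Qed.

Lemma liftE_triv (xe : {ffun Eb (contract C) -> NG}) (e : Eb C) :
  trivslope e -> liftE xe e = 0.
Proof. by move=> H; rewrite ffunE insubF //= H. Qed.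

Lemma inNeG_lift (xe : {ffun Eb (contract C) -> NG}) :
  (forall u, inNeG u (xe u)) -> forall e, inNeG e (liftE xe e).
Proof.
move=> H e; case: (boolP (trivslope e)) => He.
  by rewrite liftE_triv //; apply: inNeG0.
by have := liftE_val xe (Sub e He : Ebar C) => /= ->; exact: (proj1 (inNeG_contract (Sub e He : Ebar C) _) (H _)).
Qed.

Lemma dmap_lift beta (xv : {ffun Vf (contract C) -> NG}) (xe : {ffun Eb (contract C) -> NG}) :
  dmap beta (liftV xv) (liftE xe) = liftE (dmap beta xv xe).
Proof.
apply/ffunP => e; case: (boolP (trivslope e)) => He.
  by rewrite liftE_triv // ffunE liftE_triv // mul0rn addr0 !ffunE piv_edge // subrr.
have := liftE_val (dmap beta xv xe) (Sub e He : Ebar C) => /= ->.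
by rewrite !ffunE (insubT (fun e => ~~ trivslope e) He) /= lmult_contract.
Qed.

Definition pV (xv : {ffun Vf C -> NG}) : {ffun Vf (contract C) -> NG} := [ffun v => xv (val v)].
Definition pE (xe : {ffun Eb C -> NG}) : {ffun Eb (contract C) -> NG} := [ffun u => xe (val u)].

Lemma liftV_pV (xv : {ffun Vf C -> NG}) :
  (forall e : Eb C, trivslope e -> xv (tgt e) = xv (src e)) -> liftV (pV xv) = xv.
Proof. by move=> H; apply/ffunP => v; rewrite !ffunE; apply: const_piv. Qed.

Lemma liftE_pE (xe : {ffun Eb C -> NG}) :
  (forall e : Eb C, trivslope e -> xe e = 0) -> liftE (pE xe) = xe.
Proof.
move=> H; apply/ffunP => e; case: (boolP (trivslope e)) => He.
  by rewrite liftE_triv // H.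
by have := liftE_val (pE xe) (Sub e He : Ebar C) => /= ->; rewrite ffunE.
Qed.

Lemma dmap_p beta (xv : {ffun Vf C -> NG}) (xe : {ffun Eb C -> NG}) :
  (forall e : Eb C, trivslope e -> xv (tgt e) = xv (src e)) ->
  dmap beta (pV xv) (pE xe) = [ffun u => dmap beta xv xe (val u)].
Proof.
move=> H; apply/ffunP => u; rewrite !ffunE /= lmult_contract.
by rewrite !(const_piv H).
Qed.

Lemma triv_const beta (xv : {ffun Vf C -> NG}) (xe : {ffun Eb C -> NG}) (e : Eb C) :
  trivslope e -> inNeG e (xe e) -> dmap beta xv xe e = 0 -> xv (tgt e) = xv (src e).
Proof.
by move=> He /(inNeG_triv He) h; rewrite ffunE h mul0rn addr0; apply: subr0_eq.
Qed.

End Cur.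

Unset Implicit Arguments. Set Strict Implicit. Set Printing Implicit Defensive.
Import Order.TTheory GRing.Theory Num.Theory.
Local Open Scope ring_scope.

Lemma gnorm (a c p : nat) : 1 - (a + p)%N%:Z + (c + p)%N%:Z = (1 + c)%N%:Z - a%:Z.
Proof. by rewrite !PoszD opprD (addrC (Posz c) (Posz p)) addrA -(addrA 1) subrK addrAC. Qed.
Lemma diffZ (u v w x k : nat) : (k + w + v = u + x)%N -> (u%:Z - v%:Z) - (w%:Z - x%:Z) = k%:Z.
Proof.
move=> h; apply/eqP; by rewrite subr_eq addrA subr_eq (addrAC (k%:Z + w%:Z)) eq_sym subr_eq -!PoszD h.
Qed.

Theorem mainTheorem9 (R : archiRealFieldType) (n : nat) (C : curve R n) (G : zmodType) :
  is_curve C ->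
  genus (contract C) <= genus C /\
  forall beta : bool,
  [/\ (* natural map E^1(Cbar) -> E^1(C) is well defined ... *)
      (forall (xv : {ffun Vf (contract C) -> 'rV[G]_n})
              (xe : {ffun Eb (contract C) -> 'rV[G]_n}),
          inE1 G beta xv xe -> inE1 G beta (liftV xv) (liftE xe)),
      (* ... injective ... *)
      (forall (xv xv' : {ffun Vf (contract C) -> 'rV[G]_n})
              (xe xe' : {ffun Eb (contract C) -> 'rV[G]_n}),
           inE1 G beta xv xe -> inE1 G beta xv' xe' ->
          liftV xv = liftV xv' -> liftE xe = liftE xe' ->
          xv = xv' /\ xe = xe'),
      (* ... and surjective *)
      (forall (xv : {ffun Vf C -> 'rV[G]_n}) (xe : {ffun Eb C -> 'rV[G]_n}),
          inE1 G beta xv xe ->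
          exists (xv' : {ffun Vf (contract C) -> 'rV[G]_n})
                 (xe' : {ffun Eb (contract C) -> 'rV[G]_n}), [/\ inE1 G beta xv' xe', liftV xv' = xv & liftE xe' = xe])
    & [/\ (* the induced map E^2(Cbar) -> E^2(C) is well defined ... *)
      (forall y : {ffun Eb (contract C) -> 'rV[G]_n},
          inIm G beta y -> inIm G beta (liftE y)),
      (* ... and injective, *)
      (forall y : {ffun Eb (contract C) -> 'rV[G]_n},
          inIm G beta (liftE y) -> inIm G beta y)
    & (* and there is a surjection E^2(C) -> N_G^(g(C) - g(Cbar)) whose kernel
         is exactly the image of E^2(Cbar) *)
      exists phi : {ffun Eb C -> 'rV[G]_n} ->
                   {ffun 'I_(`|genus C - genus (contract C)|%N) -> 'rV[G]_n},
        [/\ (forall a b, phi (a + b) = phi a + phi b),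
            (forall t, exists z, phi z = t)
          & (forall z, phi z = 0 <->
               exists y : {ffun Eb (contract C) -> 'rV[G]_n},
                 inIm G beta (z - liftE y))]]].
Proof.
move=> _.
pose E0 := [set e : Eb C | trivslope e].
have [b [hb [phi [sec [[phB secB loc surj] [K1 K2]]]]]] :=
  InvAll (@src R n C) (@tgt R n C) ('rV[G]_n) E0.
have hcnt : #|Eb C| = (#|Eb (contract C)| + #|E0|)%N.
  rewrite card_sig cardsE -(cardC [pred e : Eb C | trivslope e]) addnC.
  by congr addn; apply: eq_card => e; rewrite !inE.
have hV : #|Vf (contract C)| = compn (@src R n C) (@tgt R n C) E0.
  rewrite card_sig /compn /n_comp_mem; apply: eq_card => v.
  by rewrite !inE andbT /roots (eq_root (adj0_eq (C:=C))).
have hgen : genus C - genus (contract C) = b%:Z.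
  rewrite /genus /= !gnorm; apply: diffZ.
  by rewrite hcnt hV addnAC hb addnC addnA addnAC.
split; first by rewrite -subr_ge0 hgen.
have liftE0 : liftE (0 : {ffun Eb (contract C) -> 'rV[G]_n}) = 0.
  by apply/ffunP => e; rewrite !ffunE; case: insub => // u; rewrite ffunE.
move=> beta; split; [| | | split].
- move=> xv xe [Hn Hd]; split; first exact: inNeG_lift.
  by rewrite dmap_lift Hd liftE0.
- move=> xv xv' xe xe' _ _ hv he; split; apply/ffunP => v.
    have := congr1 (fun F : {ffun Vf C -> 'rV[G]_n} => F (val v)) hv.
    by rewrite !ffunE piv_val.
  have := congr1 (fun F : {ffun Eb C -> 'rV[G]_n} => F (val v)) he.
  by rewrite !liftE_val.
- move=> xv xe [Hn Hd].
  have Ht : forall e : Eb C, trivslope e -> xv (tgt e) = xv (src e).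
    by move=> e He; apply: (triv_const (beta := beta) (xe := xe) He (Hn e)); rewrite Hd ffunE.
  exists (pV xv), (pE xe); split.
  + split; first by move=> u; rewrite ffunE; exact: (proj2 (inNeG_contract u _) (Hn (val u))).
    by rewrite dmap_p // Hd; apply/ffunP => u; rewrite !ffunE.
  + exact: liftV_pV.
  + by apply: liftE_pE => e He; apply: inNeG_triv He (Hn e).
- move=> y [xv [xe [Hn <-]]]; exists (liftV xv), (liftE xe); split.
    exact: inNeG_lift.
  exact: dmap_lift.
- move=> y [xv [xe [Hn Hd]]].
  have Ht : forall e : Eb C, trivslope e -> xv (tgt e) = xv (src e).
    move=> e He; apply: (triv_const (beta := beta) (xe := xe) He (Hn e)).
    by rewrite Hd liftE_triv.
  exists (pV xv), (pE xe); split.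
    by move=> u; rewrite ffunE; exact: (proj2 (inNeG_contract u _) (Hn (val u))).
  by rewrite dmap_p // Hd; apply/ffunP => u; rewrite ffunE liftE_val.
- have -> : `|genus C - genus (contract C)|%N = b by rewrite hgen absz_nat.
  exists phi.
  have ph0 : phi 0 = 0 by rewrite -(subrr 0) phB subrr.
  have phN z : phi (- z) = - phi z by rewrite -sub0r phB ph0 sub0r.
  split.
  + by move=> a c; rewrite -{1}(opprK c) phB phN opprK.
  + exact: surj.
  + move=> z; split.
    * move=> h0.
      exists [ffun u : Eb (contract C) => z (val u) - (sec z (tgt (val u)) - sec z (src (val u)))].
      exists (sec z), 0; split; first by move=> e; rewrite ffunE; apply: inNeG0.
      apply/ffunP => e.
      have -> : dmap beta (sec z) 0 e = sec z (tgt e) - sec z (src e) by rewrite !ffunE mul0rn addr0.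
      rewrite [(z - _) e]ffunE.
      case: (boolP (trivslope e)) => He.
        by rewrite [in RHS]ffunE liftE_triv // subr0 (K1 z h0) // inE.
      rewrite [in RHS]ffunE.
      have := liftE_val [ffun u : Eb (contract C) => z (val u) - (sec z (tgt (val u)) - sec z (src (val u)))] (Sub e He : Ebar C).
      move=> /= ->; rewrite ffunE /=.
      by rewrite subKr.
    * move=> [y [xv [xe [Hn Hd]]]]; apply: (K2 _ xv) => e; rewrite inE => He.
      have h1 : (z - liftE y) e = z e by rewrite ffunE [in LHS]ffunE liftE_triv // subr0.
      rewrite -h1 -Hd ffunE (inNeG_triv He (Hn e)) mul0rn addr0.
      by [].
Qed.
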